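(* Fix $\alpha\in\mathbb{R}\setminus\{0,1\}$ and let $F$ be the (weighted) generalized entropy index of parameter $\alpha$ defined in the context, with $q(\mu)=\mu^\alpha$. Let $n\ge 1$, let $K\in\mathbb{R}_{\ge 0}^{n\times n}$ be column-normalized, i.e. $\sum_{i=1}^n K_{ij}=1$ for every $j$, and assume every row of $K$ has positive sum, i.e. $K_i^\top\vec 1>0$ for all $i$, where $K_i$ denotes the $i$-th row of $K$. Then for every $\vec y\in\mathbb{R}_{>0}^n$, with $\mu=\frac1n\sum_{i=1}^n y_i$, $$F(\vec y)=\sum_{i=1}^n \frac{q\big(A(K,\vec y)_i\big)\,K_i^\top\vec 1}{q(\mu)\,n}\,F(\vec y,K_i)\;+\;F\big(A(K,\vec y),K\vec 1\big).$$
   Context: For $x\in\mathbb{R}_{>0}^n$ and a weight vector $w\in\mathbb{R}_{\ge0}^n$ with $\|w\|_1>0$, the weighted mean is $\mu_w=\sum_i w_i x_i/\|w\|_1$, and the weighted generalized entropy of parameter $\alpha\notin\{0,1\}$ is $F(x,w)=\frac{1}{\alpha(\alpha-1)}\sum_{i=1}^n\frac{w_i}{\|w\|_1}\big((x_i/\mu_w)^\alpha-1\big)$. The unweighted index is $F(x)=F(x,\vec 1)=\frac{1}{n\alpha(\alpha-1)}\sum_{i=1}^n\big((x_i/\mu)^\alpha-1\big)$ with $\mu=\frac1n\sum_i x_i$. For a nonnegative matrix $K$ with positive row sums and $\vec y\in\mathbb{R}^n$, the averaging operator is $A(K,\vec y)=\frac{K\vec y}{K\vec 1}$, with division taken entrywise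 and $\vec 1$ the all-ones vector (so $A(K,\vec y)_i$ is the average of $\vec y$ weighted by row $i$ of $K$). *)

(* Defs.v *)
From mathcomp Require Import all_boot all_order all_algebra.
From mathcomp Require Import reals exp.
Set Implicit Arguments. Unset Strict Implicit. Unset Printing Implicit Defensive.
Import Order.TTheory GRing.Theory Num.Theory.
Local Open Scope ring_scope.

Section GE.
Variable R : realType.

Definition l1norm n (w : 'I_n -> R) : R := \sum_(i < n) `|w i|.

Definition wmean n (x w : 'I_n -> R) : R :=
  (\sum_(i < n) w i * x i) / l1norm w.

Definition GEw (alpha : R) n (x w : 'I_n -> R) : R :=
  (alpha * (alpha - 1))^-1 *
  \sum_(i < n) (w i / l1norm w) * (powR (x i / wmean x w) alpha - 1).

Definition GE (alpha : R) n (x : 'I_n -> R) : R := GEw alpha x (fun _ => 1).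

Definition mean n (x : 'I_n -> R) : R := (\sum_(i < n) x i) / n%:R.

Definition rowv n (K : 'M[R]_n) (i : 'I_n) : 'I_n -> R := fun j => K i j.
Definition rowsum n (K : 'M[R]_n) : 'I_n -> R := fun i => \sum_(j < n) K i j.

Definition avgop n (K : 'M[R]_n) (y : 'I_n -> R) : 'I_n -> R :=
  fun i => (\sum_(j < n) K i j * y j) / rowsum K i.

End GE.

(* Main.v *)
Require Import Defs.
From mathcomp Require Import all_boot all_order all_algebra.
From mathcomp Require Import reals exp.
From mathcomp.algebra_tactics Require Import ring.
Import Order.TTheory GRing.Theory Num.Theory.
Local Open Scope ring_scope.

Lemma powR_div (R : realType) (x m a : R) : 0 <= x -> 0 < m ->
  powR (x / m) a = powR x a / powR m a.
Proof.
move=> x0 m0; rewrite powRM ?invr_ge0 ?(ltW m0) //; congr (_ * _).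
have -> : m^-1 = m `^ (-1) by rewrite powR_inv1 // ltW.
by rewrite -powRrM mulrC powRrM powR_inv1 // powR_ge0.
Qed.

Theorem proposition1 (R : realType) (alpha : R) (n : nat) (K : 'M[R]_n)
    (y : 'I_n -> R) :
  alpha != 0 -> alpha != 1 -> (0 < n)%N ->
  (forall i j, 0 <= K i j) ->
  (forall j, \sum_(i < n) K i j = 1) ->
  (forall i, 0 < rowsum K i) ->
  (forall i, 0 < y i) ->
  GE alpha y =
    \sum_(i < n)
       (powR (avgop K y i) alpha * rowsum K i) / (powR (mean y) alpha * n%:R)
         * GEw alpha y (rowv K i)
    + GEw alpha (avgop K y) (rowsum K).
Proof.
move=> a0 a1 n0 K0 Kc Kr y0.
have nN : (n%:R : R) != 0 by rewrite pnatr_eq0 -lt0n.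
have ypos : 0 < mean y.
  rewrite /mean divr_gt0 ?ltr0n //.
  rewrite (bigD1 (Ordinal n0)) //= ltr_pwDl ?y0 ?sumr_ge0 // => i _.
  exact: ltW.
have apos : forall i, 0 < avgop K y i.
  move=> i; rewrite /avgop divr_gt0 //.
  have := Kr i; rewrite /rowsum => h.
  have nn : forall j : 'I_n, true -> 0 <= K i j * y j.
    by move=> j _; rewrite mulr_ge0 ?K0 ?ltW.
  rewrite lt0r sumr_ge0 ?andbT //.
  apply/negP => /eqP /(psumr_eq0P nn) H.
  have H' : forall j, K i j = 0.
    move=> j; have := H j isT; have := y0 j.
    move=> yj /eqP; rewrite mulf_eq0 => /orP [/eqP //|/eqP yj0].
    by move: yj; rewrite yj0 ltxx.
  by move: h; rewrite (eq_bigr (fun=> 0)) ?big1 ?ltxx // => j _; rewrite H'.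
have l1one : l1norm (fun _ : 'I_n => (1:R)) = n%:R.
  by rewrite /l1norm (eq_bigr (fun=> 1)) ?sumr_const ?card_ord // => i _; rewrite normr1.
have l1row : forall i, l1norm (rowv K i) = rowsum K i.
  by move=> i; rewrite /l1norm /rowsum; apply: eq_bigr => j _; rewrite /rowv ger0_norm.
have l1rs : l1norm (rowsum K) = n%:R.
  rewrite /l1norm (eq_bigr (rowsum K)); last by move=> i _; rewrite ger0_norm ?ltW.
  rewrite /rowsum exchange_big /= (eq_bigr (fun=> 1)) ?sumr_const ?card_ord // => j _; exact: Kc.
have wm1 : wmean y (fun _ => 1) = mean y.
  by rewrite /wmean l1one /mean; congr (_ / _); apply: eq_bigr => i _; rewrite mul1r.
have wmrow : forall i, wmean y (rowv K i) = avgop K y i.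
  by move=> i; rewrite /wmean l1row.
have wmavg : wmean (avgop K y) (rowsum K) = mean y.
  rewrite /wmean l1rs /mean; congr (_ / _).
  rewrite (eq_bigr (fun i => \sum_(j < n) K i j * y j)); last first.
    by move=> i _; rewrite /avgop mulrC divfK // gt_eqF.
  rewrite exchange_big /=; apply: eq_bigr => j _.
  by rewrite -mulr_suml Kc mul1r.
set c := (alpha * (alpha - 1))^-1.
set M := powR (mean y) alpha.
have Mpos : 0 < M by rewrite powR_gt0.
rewrite /GE.
have term : forall i : 'I_n,
   powR (avgop K y i) alpha * rowsum K i / (M * n%:R) *
   GEw alpha y (rowv K i)
   = c / (M * n%:R) * (\sum_(j < n) K i j * powR (y j) alpha
                        - rowsum K i * powR (avgop K y i) alpha).
  move=> i.
  have Qp : 0 < powR (avgop K y i) alpha by rewrite powR_gt0.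
  have rp := Kr i.
  rewrite /GEw wmrow l1row -/c.
  under eq_bigr => j _ do rewrite (@powR_div R _ _ alpha (ltW (y0 j)) (apos i)).
  rewrite [X in _ = _ * (_ - X)](_ : _ = \sum_(j < n) K i j * powR (avgop K y i) alpha);
    last by rewrite /rowsum mulr_suml.
  rewrite -sumrB.
  move: (rowsum K i) rp => r rp.
  move: (powR (avgop K y i) alpha) Qp => Q Qp.
  rewrite !mulr_sumr; apply: eq_bigr => j _.
  rewrite /rowv.
  field; rewrite ?gt_eqF ?ltr0n //.
rewrite (eq_bigr _ (fun i _ => term i)).
rewrite /GEw wm1 wmavg l1one l1rs -/c.
have hs : \sum_(i < n) \sum_(j < n) K i j * powR (y j) alpha
          = \sum_(j < n) powR (y j) alpha.
  by rewrite exchange_big; apply: eq_bigr => j _; rewrite -mulr_suml Kc mul1r.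
have hr : \sum_(i < n) rowsum K i = n%:R.
  rewrite /rowsum exchange_big /= (eq_bigr (fun=> 1)) ?sumr_const ?card_ord //.
rewrite -[\sum_(i < n) c / (M * n%:R) * _]mulr_sumr sumrB hs.
have e1 : \sum_(i < n) 1 / n%:R * ((y i / mean y) `^ alpha - 1)
   = (\sum_(j < n) powR (y j) alpha) * (1 / (n%:R * M)) - 1.
  rewrite (eq_bigr (fun j => powR (y j) alpha * (1 / (n%:R * M)) - 1 / n%:R)).
    by rewrite sumrB -mulr_suml sumr_const card_ord -mulr_natr; field; rewrite ?gt_eqF ?ltr0n.
  move=> j _; rewrite (@powR_div R _ _ alpha (ltW (y0 j)) ypos) -/M.
  by field; rewrite ?gt_eqF ?ltr0n.
have e2 : \sum_(i < n) rowsum K i / n%:R * ((avgop K y i / mean y) `^ alpha - 1)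
   = (\sum_(i < n) rowsum K i * powR (avgop K y i) alpha) * (1 / (n%:R * M)) - 1.
  rewrite (eq_bigr (fun i => rowsum K i * powR (avgop K y i) alpha * (1 / (n%:R * M))
                    - rowsum K i * (1 / n%:R))).
    by rewrite sumrB -!mulr_suml hr; field; rewrite ?gt_eqF ?ltr0n.
  move=> i _; rewrite (@powR_div R _ _ alpha (ltW (apos i)) ypos) -/M.
  by field; rewrite ?gt_eqF ?ltr0n.
rewrite e1 e2.
field; rewrite ?gt_eqF ?ltr0n //.
Qed.
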